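(* Let $f\in\mathscr{F}_r$ be normalized ($f(\emptyset)=0$) with $r$-decomposition $(V_i,f_i)_{i=1}^m$, and let $S\subseteq V$ be nonempty. Then the function $f^S:2^{V\setminus S}\to\mathbb{R}_+$ is nonnegative, monotone and supermodular. Moreover, it admits the $(r-1)$-decomposition $(V_i\setminus S,f_i^S)_{i\in I_S}$, i.e. $f^S(T)=\sum_{i\in I_S}f_i^S(T\cap(V_i\setminus S))$ for all $T\subseteq V\setminus S$ with $|V_i\setminus S|\le r-1$, where the functions $f_i^S$, $i\in I_S$, are nonnegative, monotone and supermodular.
   Context: $V$ is a finite set, $[m]=\{1,\dots,m\}$. Supermodular: $g(A)+g(B)\le g(A\cup B)+g(A\cap B)$; monotone: $g(B)\le g(A)$ for $B\subseteq A$. $\mathscr{F}_r$ is the family of nonnegative monotone supermodular $f:2^V\to\mathbb{R}_+$ admitting an $r$-decomposition $(V_i,f_i)_{i=1}^m$: subsets $V_i\subseteq V$ with $|V_i|\le r$ and nonnegative supermodular $f_i:2^{V_i}\to\mathbb{R}_+$ with $f(S)=\sum_i f_i(S\cap V_i)$ for all $S\subseteq V$. For nonempty $S\subseteq V$: $I_S=\{i\in[m]:V_i\cap S\ne\emptyset\}$; $f^S(T)=\sum_{i\in I_S}\big(f_i((S\cup T)\cap V_i)-f_i(S\cap V_i)\big)$ for $T\subseteq V\setminus S$; and for $i\in I_S$, $f_i^S:2^{V_i\setminus S}\to\mathbb{R}$, $f_i^S(T)=f_i((S\cup T)\cap V_i)-f_i(S\cap V_i)$. *)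

(* Defs.v *)
(* Set functions on a finite ground set V are modelled as
   total maps {set V} -> R; a function "on 2^D" is only constrained on
   subsets of D. *)
From mathcomp Require Import all_boot all_order all_algebra.
Set Implicit Arguments. Unset Strict Implicit. Unset Printing Implicit Defensive.
Import Order.TTheory GRing.Theory Num.Theory.
Local Open Scope ring_scope.

Section Defs.
Variables (R : realFieldType) (V : finType).

Definition nonneg_on (D : {set V}) (g : {set V} -> R) :=
  forall A : {set V}, A \subset D -> 0 <= g A.

Definition monotone_on (D : {set V}) (g : {set V} -> R) :=
  forall A B : {set V}, A \subset D -> B \subset D -> B \subset A -> g B <= g A.

Definition supermodular_on (D : {set V}) (g : {set V} -> R) :=
  forall A B : {set V}, A \subset D -> B \subset D ->
    g A + g B <= g (A :|: B) + g (A :&: B).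

Definition decomposition_on (m : nat) (D : {set V}) (r : nat)
    (g : {set V} -> R) (I : {set 'I_m})
    (W : 'I_m -> {set V}) (gs : 'I_m -> {set V} -> R) :=
  (forall i, i \in I ->
     [/\ W i \subset D, #|W i| <= r, nonneg_on (W i) (gs i)
       & supermodular_on (W i) (gs i)])%N /\
  (forall T : {set V}, T \subset D -> g T = \sum_(i in I) gs i (T :&: W i)).

Definition r_decomposition (m r : nat) (f : {set V} -> R)
    (Vs : 'I_m -> {set V}) (fs : 'I_m -> {set V} -> R) :=
  decomposition_on [set: V] r f [set: 'I_m] Vs fs.

Definition in_Fr (r : nat) (f : {set V} -> R) :=
  [/\ nonneg_on [set: V] f, monotone_on [set: V] f, supermodular_on [set: V] f
    & exists (m : nat) (Vs : 'I_m -> {set V}) (fs : 'I_m -> {set V} -> R),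
        r_decomposition r f Vs fs].

Definition I_S (m : nat) (Vs : 'I_m -> {set V}) (S : {set V}) : {set 'I_m} :=
  [set i | Vs i :&: S != set0].

Definition fiS (m : nat) (Vs : 'I_m -> {set V}) (fs : 'I_m -> {set V} -> R)
    (S : {set V}) (i : 'I_m) (T : {set V}) : R :=
  fs i ((S :|: T) :&: Vs i) - fs i (S :&: Vs i).

Definition fS (m : nat) (Vs : 'I_m -> {set V}) (fs : 'I_m -> {set V} -> R)
    (S : {set V}) (T : {set V}) : R :=
  \sum_(i in I_S Vs S) fiS Vs fs S i T.

End Defs.

(* Main.v *)
Require Import Defs.
From mathcomp Require Import all_boot all_order all_algebra.
Import Order.TTheory GRing.Theory Num.Theory.
Local Open Scope ring_scope.

Section Aux.
Variables (R : realFieldType) (V : finType) (r m : nat)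
    (f : {set V} -> R) (Vs : 'I_m -> {set V}) (fs : 'I_m -> {set V} -> R)
    (S : {set V}).
Hypothesis hd : r_decomposition r f Vs fs.
Hypothesis h0 : f set0 = 0.

Lemma fs0 i : fs i set0 = 0.
Proof.
case: hd => hw hsum.
have := hsum set0 (sub0set _).
rewrite h0.
under eq_bigr => j _ do rewrite set0I.
move/esym/psumr_eq0P => H; apply: H => //.
move=> j _; have [_ _ hn _] := hw j (in_setT j); exact: hn (sub0set _).
Qed.

Lemma fs_mono i (A B : {set V}) : A \subset Vs i -> B \subset A -> fs i B <= fs i A.
Proof.
move=> hA hBA.
case: hd => hw _; have [_ _ hn hs] := hw i (in_setT i).
have hB : B \subset Vs i by apply: subset_trans hA.
have hD : A :\: B \subset Vs i by apply: subset_trans (subsetDl _ _) hA.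
have := hs B (A :\: B) hB hD.
have -> : B :|: A :\: B = A by apply/setP=> x; rewrite !inE;
  move/subsetP: hBA => /(_ x); case: (x \in B); case: (x \in A) => //= ->.
have -> : B :&: (A :\: B) = set0 by apply/setP=> x; rewrite !inE; case: (x \in B).
rewrite fs0 addr0 => H.
apply: le_trans H; rewrite lerDl; exact: hn.
Qed.

Lemma fiS_mono i (T1 T2 : {set V}) : T1 \subset T2 -> fiS Vs fs S i T1 <= fiS Vs fs S i T2.
Proof.
move=> h; rewrite /fiS lerD2r; apply: fs_mono; first exact: subsetIr.
by apply: setSI; apply: setUS.
Qed.

Lemma fiS_nonneg i (T : {set V}) : 0 <= fiS Vs fs S i T.
Proof.
have := @fiS_mono i set0 T (sub0set T); rewrite {1}/fiS setU0 subrr; exact.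
Qed.

Lemma fiS_super i (A B : {set V}) :
  fiS Vs fs S i A + fiS Vs fs S i B <=
  fiS Vs fs S i (A :|: B) + fiS Vs fs S i (A :&: B).
Proof.
case: hd => hw _; have [_ _ _ hs] := hw i (in_setT i).
have := hs ((S :|: A) :&: Vs i) ((S :|: B) :&: Vs i) (subsetIr _ _) (subsetIr _ _).
have -> : (S :|: A) :&: Vs i :|: (S :|: B) :&: Vs i = (S :|: (A :|: B)) :&: Vs i.
  by apply/setP=> x; rewrite !inE; case: (x \in S); case: (x \in A);
     case: (x \in B); case: (x \in Vs i).
have -> : (S :|: A) :&: Vs i :&: ((S :|: B) :&: Vs i) = (S :|: (A :&: B)) :&: Vs i.
  by apply/setP=> x; rewrite !inE; case: (x \in S); case: (x \in A);
     case: (x \in B); case: (x \in Vs i).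
rewrite /fiS => H.
rewrite addrACA [X in _ <= X]addrACA lerD2r; exact: H.
Qed.

End Aux.

Theorem lemma3 (R : realFieldType) (V : finType) (r m : nat)
    (f : {set V} -> R) (Vs : 'I_m -> {set V}) (fs : 'I_m -> {set V} -> R)
    (S : {set V}) :
  in_Fr r f ->
  r_decomposition r f Vs fs ->
  f set0 = 0 ->
  S != set0 ->
  [/\ nonneg_on (~: S) (fS Vs fs S),
      monotone_on (~: S) (fS Vs fs S),
      supermodular_on (~: S) (fS Vs fs S),
      decomposition_on (~: S) r.-1 (fS Vs fs S) (I_S Vs S)
        (fun i => Vs i :\: S) (fiS Vs fs S)
    & forall i, i \in I_S Vs S ->
        [/\ nonneg_on (Vs i :\: S) (fiS Vs fs S i),
            monotone_on (Vs i :\: S) (fiS Vs fs S i)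
          & supermodular_on (Vs i :\: S) (fiS Vs fs S i)]].
Proof.
move=> _ hd h0 _.
split.
- move=> A _; rewrite /fS; apply: sumr_ge0 => i _; exact: (fiS_nonneg _ _ _ _ _ _ _ _ hd h0).
- move=> A B _ _ hBA; rewrite /fS; apply: ler_sum => i _; exact: (fiS_mono _ _ _ _ _ _ _ _ hd h0).
- move=> A B _ _; rewrite /fS -!big_split /=; apply: ler_sum => i _. exact: (fiS_super _ _ _ _ _ _ _ _ hd).
- split.
  + move=> i; rewrite inE => hi; split.
    * by rewrite setDE subsetIr.
    * case: hd => hw _; have [_ hc _ _] := hw i (in_setT i).
      have hlt : (#|Vs i :\: S| < #|Vs i|)%N.
        apply: proper_card; rewrite properEneq subsetDl andbT.
        apply/negP => /eqP E; move/set0Pn: hi => [x]; rewrite -E !inE.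
        by case: (x \in S); rewrite ?andbF.
      by rewrite -ltnS (leq_trans _ (leqSpred r)) // (leq_trans hlt hc).
    * move=> A _; exact: (fiS_nonneg _ _ _ _ _ _ _ _ hd h0).
    * move=> A B _ _; exact: (fiS_super _ _ _ _ _ _ _ _ hd).
  + move=> T hT; rewrite /fS; apply: eq_bigr => i _; rewrite /fiS.
    congr (fs i _ - _); apply/setP=> x; rewrite !inE.
    move/subsetP: hT => /(_ x); rewrite !inE.
    by case: (x \in S); case: (x \in T); case: (x \in Vs i) => //= ->.
- move=> i _; split.
  + move=> A _; exact: (fiS_nonneg _ _ _ _ _ _ _ _ hd h0).
  + move=> A B _ _ h; exact: (fiS_mono _ _ _ _ _ _ _ _ hd h0).
  + move=> A B _ _; exact: (fiS_super _ _ _ _ _ _ _ _ hd).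
Qed.
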